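(* Let $q>1$ and $n>1$ be integers, let $q'\ge 2q-1$ be an integer with $q'>q$, and let $S=(s_i)$ be an $\mathcal{OS}_q(n)$ of period $m$ with ring sequence $[s_0,\ldots,s_{m-1}]$. Let $S'$ be the periodic sequence over $\mathbb{Z}_{q'}$ with ring sequence $[s_0',\ldots,s_{m-1}']$, where for $x\in\mathbb{Z}_q$, $x'$ denotes the residue class in $\mathbb{Z}_{q'}$ of the unique integer in $\{0,1,\ldots,q-1\}$ belonging to the class $x$. Then $S'$ is an $\mathcal{SOS}_{q'}(n)$.
   Context: For a periodic sequence $S=(s_i)$ over $\mathbb{Z}_q$ write $\mathbf{s}_n(i)=(s_i,\ldots,s_{i+n-1})$; for an $n$-tuple $\mathbf{u}=(u_0,\ldots,u_{n-1})$, $\mathbf{u}^R=(u_{n-1},\ldots,u_0)$ and $-\mathbf{u}=(-u_0,\ldots,-u_{n-1})$. A $q$-ary $n$-window sequence of period $m$ is a periodic sequence with $\mathbf{s}_n(i)=\mathbf{s}_n(j)\Rightarrow i\equiv j\pmod m$. An $\mathcal{OS}_q(n)$ is an $n$-window sequence with $\mathbf{s}_n(i)\neq\mathbf{s}_n(j)^R$ for all $i,j$; an $\mathcal{SOS}_q(n)$ is an $\mathcal{OS}_q(n)$ that additionally satisfies $\mathbf{s}_n(i)\neq-\mathbf{s}_n(j)^R$ for all $i,j$. The ring sequence $[a_0,\ldots,a_{m-1}]$ of a sequence of period $m$ is one period, i.e. the sequence is given by $s_{i+tm}=a_i$. *)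

(* Defs.v *)
From HB Require Import structures.
From mathcomp Require Import all_boot all_order all_algebra.
Set Implicit Arguments. Unset Strict Implicit. Unset Printing Implicit Defensive.
Import GRing.Theory.

Definition window (T : Type) (s : nat -> T) (n i : nat) : seq T :=
  [seq s (i + k) | k <- iota 0 n].

Definition periodic (T : Type) (s : nat -> T) (m : nat) : Prop :=
  (0 < m)%N /\ forall i, s (i + m) = s i.

Definition is_window_seq (T : eqType) (n m : nat) (s : nat -> T) : Prop :=
  periodic s m /\
  forall i j, window s n i = window s n j -> i = j %[mod m].

Definition is_OS (T : eqType) (n m : nat) (s : nat -> T) : Prop :=
  is_window_seq n m s /\
  forall i j, window s n i <> rev (window s n j).

Definition is_SOS (T : zmodType) (n m : nat) (s : nat -> T) : Prop :=
  is_OS n m s /\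
  forall i j, window s n i <> map (fun x => - x)%R (rev (window s n j)).

Definition ring_seq (T : Type) (m : nat) (a : nat -> T) : nat -> T :=
  fun i => a (i %% m).

(* Main.v *)
Require Import Defs.
From mathcomp Require Import all_boot all_order all_algebra.
From mathcomp Require Import zify.
From Stdlib Require Import FunctionalExtensionality.
Import GRing.Theory.

Section Aux.
Variables (q q' : nat).
Hypothesis (hq : (1 < q)%N) (hq2 : (2 * q - 1 <= q')%N) (hqq : (q < q')%N).

Definition fz (x : 'Z_q) : 'Z_q' := ((nat_of_ord x)%:R)%R.

Lemma ltq (x : 'Z_q) : (nat_of_ord x < q)%N.
Proof. case: x => v hv /=; by rewrite Zp_cast in hv. Qed.

Lemma hq'1 : (1 < q')%N. Proof. lia. Qed.

Lemma val_fz x : nat_of_ord (fz x) = nat_of_ord x.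
Proof. rewrite /fz val_Zp_nat ?hq'1 // modn_small //; have := ltq x; lia. Qed.

Lemma fz_inj : injective fz.
Proof. move=> x y H; apply: val_inj => /=; by rewrite -val_fz H val_fz. Qed.

Lemma fz_neg x y : fz x = (- fz y)%R -> nat_of_ord x = 0%N /\ nat_of_ord y = 0%N.
Proof.
move=> /eqP; rewrite -subr_eq0 opprK /fz -natrD => /eqP H.
have := congr1 (@nat_of_ord _) H; rewrite val_Zp_nat ?hq'1 //= => H2.
have := ltq x; have := ltq y => a b.
rewrite modn_small in H2; last lia. lia.
Qed.
End Aux.

Lemma nth_map' (T U : Type) (f : T -> U) x0 y0 s i :
  (i < size s)%N -> nth y0 (map f s) i = f (nth x0 s i).
Proof. by move=> h; rewrite (set_nth_default (f x0)) ?size_map // (nth_map x0). Qed.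

Lemma window_map (T U : Type) (f : T -> U) (s : nat -> T) n i :
  window (fun k => f (s k)) n i = map f (window s n i).
Proof. by rewrite /window -map_comp. Qed.

Theorem theorem3p2 (q n q' m : nat) (s : nat -> 'Z_q) :
  (1 < q)%N -> (1 < n)%N -> (2 * q - 1 <= q')%N -> (q < q')%N ->
  is_OS n m s ->
  is_SOS n m (ring_seq m (fun i => ((nat_of_ord (s i))%:R : 'Z_q')%R)).
Proof.
move=> hq hn hq2 hqq [[[m0 per] win] os].
have sm : forall i, s (i %% m) = s i.
  move=> i; rewrite {2}(divn_eq i m); elim: (i %/ m) => [|k IH]; first by rewrite mul0n add0n.
  by rewrite mulSn (addnC m) -addnA (addnC m) addnA per.
have E : ring_seq m (fun i => ((nat_of_ord (s i))%:R : 'Z_q')%R) = (fun i => fz q q' (s i)).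
  by apply: functional_extensionality => i; rewrite /ring_seq sm.
rewrite E.
have W : forall i, window (fun i => fz q q' (s i)) n i = map (fz q q') (window s n i).
  by move=> i; rewrite window_map.
split; [split; [split; [split => //; by move=> i; rewrite per | ] | ] | ].
- move=> i j; rewrite !W => /(inj_map (@fz_inj q q' hq hq2 hqq)); exact: win.
- move=> i j; rewrite !W -map_rev => /(inj_map (@fz_inj q q' hq hq2 hqq)); exact: os.
- move=> i j; rewrite !W -map_rev => H.
  apply: (os i j).
  have sz : size (window s n i) = size (rev (window s n j)).
    by rewrite size_rev /window !size_map !size_iota.
  apply: (eq_from_nth (x0 := 0%R) sz) => k hk.
  have := congr1 (fun l => nth 0%R l k) H.
  rewrite (@nth_map' _ _ _ (0 : 'Z_q)%R) // (@nth_map' _ _ _ (0 : 'Z_q')%R); last by rewrite size_map -sz.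
  rewrite (@nth_map' _ _ _ (0 : 'Z_q)%R); last by rewrite -sz.
  move=> /(@fz_neg q q' hq hq2 hqq) [a b].
  by apply: val_inj; rewrite /= a b.
Qed.
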